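(* Let $p,q$ be positive integers with $p+q$ odd. For all $n\ge3$ and all $g\in\mathcal{J}^{p,q}_n$, $\psi_n(g)\equiv\psi_{n-1}(g_L)+\psi_{n-1}(g_R)\pmod 2$.
   Context: Let $p,q$ be positive integers with $p+q$ odd. $\mathbb{Z}_{2^k}$ denotes the integers modulo $2^k$ ($\mathbb{Z}_1$ trivial); as $p+q$ is odd, division by $p+q$ and $(p+q)^2$ is well defined in $\mathbb{Z}_{2^k}$. For $m\ge1$, $D_{2m}$ is the dihedral group of order $2m$, realized as pairs $(f,x)$, $f\in\mathbb{Z}_2$, $x\in\mathbb{Z}_m$, with product $(f_1,x_1)(f_2,x_2)=(f_1+f_2,x_1+(-1)^{f_1}x_2)$. Define $\Phi:D_{2m}\to D_{2m}$, $\Phi((f,x))=(f,\delta(f=1)(p+q)(p-q)-x)$, where $\delta(f=1)$ is $1$ if $f=1$ and $0$ otherwise. $\mathrm{Aut}(T_1)$ is trivial; for $k\ge1$, $\mathrm{Aut}(T_{k+1})$ is the set of triples $g=(g_f,g_L,g_R)$, $g_f\in\mathbb{Z}_2$, $g_L,g_R\in\mathrm{Aut}(T_k)$, with product $(f,A,B)(g,C,D)=(f+g,AC,BD)$ if $f=0$ and $(f+g,AD,BC)$ if $f=1$; subscripts chain ($g_{LR}=(g_L)_R$, $g_{Lf}=(g_L)_f$). Recursively: $\mathcal{J}_1=\mathrm{Aut}(T_2)$, $\psi_1=0$, $\Delta_1(g)=(g_f,0)$; $\mathcal{J}_2=\{g\in\mathrm{Aut}(T_3):g_L=g_R\}$,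 $\psi_2(g)=\delta(g_{Lf}=1)\in\mathbb{Z}_2$, $\Delta_2(g)=(g_f,\psi_2(g))$; for $n\ge3$, $\mathcal{J}_n=\{g\in\mathrm{Aut}(T_{n+1}):g_L,g_R\in\mathcal{J}_{n-1},\ \Delta_{n-1}(g_L)=\Phi(\Delta_{n-1}(g_R))\}$, with $\psi_n:\mathcal{J}_n\to\mathbb{Z}_{2^{\lfloor n/2\rfloor}}$ given by $\psi_n(g)=(\psi_{n-1}(g_L)+\psi_{n-1}(g_R))/(p+q)$ for odd $n$ and $\psi_n(g)=\big(2(\psi_{n-2}(g_{LL})+\psi_{n-2}(g_{RL}))-\delta(g_{Lf}=1)(p+q)(p-q)\big)/(p+q)^2$ for even $n$ (with $2\psi_{n-2}(\cdot)$ read in $\mathbb{Z}_{2^{n/2}}$), and $\Delta_n:\mathcal{J}_n\to D_{2^{\lfloor n/2\rfloor+1}}$ given by $\Delta_n(g)=(g_f,\psi_{n-1}(g_L)-\psi_{n-1}(g_R))$ for odd $n$ and $\Delta_n(g)=(g_f,(p+q)\psi_n(g)-2\psi_{n-1}(g_R))$ for even $n$. In the claim all values are reduced modulo $2$. *)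

(* Defs.v *)
From mathcomp Require Import all_boot all_order all_algebra.
Unset Printing Implicit Defensive.
Import Order.TTheory GRing.Theory Num.Theory.
Local Open Scope ring_scope.

(* autT k = Aut(T_{k+1}):  Aut(T_1) trivial, Aut(T_{k+1}) = Z_2 x Aut(T_k) x Aut(T_k). *)
Fixpoint autT (k : nat) : Type :=
  match k with
  | O => unit
  | S k' => (bool * autT k' * autT k')%type
  end.

Definition gf {k : nat} (g : autT k.+1) : bool := (g : bool * autT k * autT k).1.1.
Definition gL {k : nat} (g : autT k.+1) : autT k := (g : bool * autT k * autT k).1.2.
Definition gR {k : nat} (g : autT k.+1) : autT k := (g : bool * autT k * autT k).2.

(* Elements of Z_{2^j} are represented by integers reduced to [0, 2^j). *)
(* Modulus of the codomain of psi_n (and of the Z-part of Delta_n): 2^{floor(n/2)}. *)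
Definition pow2mod (n : nat) : int := (2 ^ (n./2))%N%:Z.

(* inverse of u modulo m (u coprime to m), via the Bezout coefficient *)
Definition invmod (u m : int) : int := (egcdz u m).1.
Definition divmod (a u m : int) : int := ((a * invmod u m) %% m)%Z.

Definition delta (b : bool) : int := (b : nat)%:Z.

(* psi_n : J_n -> Z_{2^{floor(n/2)}}  (defined on all of Aut(T_{n+1})) *)
Fixpoint psi (p q : nat) (n : nat) {struct n} : autT n -> int :=
  match n return autT n -> int with
  | O => fun _ => 0
  | S n1 => fun g =>
    (match n1 as k return autT k.+1 -> (autT k -> int) -> int with
     | O => fun _ _ => 0                              (* n = 1 *)
     | S m => fun g psi_prev =>
       if m == 0%N then delta (gf (gL g))             (* n = 2 *)
       else if odd m then                             (* n = m+2 >= 3 odd *)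
         divmod (psi_prev (gL g) + psi_prev (gR g)) (p + q)%N%:Z (pow2mod m.+2)
       else                                           (* n = m+2 >= 4 even *)
         divmod (2 * (psi p q m (gL (gL g)) + psi p q m (gL (gR g)))
                 - delta (gf (gL g)) * (p + q)%N%:Z * (p%:Z - q%:Z))
                (((p + q)%N%:Z) ^+ 2) (pow2mod m.+2)
     end) g (psi p q n1)
  end.

(* Dihedral group D_{2m} elements (f, x), f in Z_2 (bool), x in Z_m. *)
Definition Phi (p q : nat) (m : int) (fx : bool * int) : bool * int :=
  (fx.1, ((delta fx.1 * (p + q)%N%:Z * (p%:Z - q%:Z) - fx.2) %% m)%Z).

(* Delta_n : J_n -> D_{2^{floor(n/2)+1}}, i.e. x in Z_{2^{floor(n/2)}} *)
Definition Delta (p q : nat) (n : nat) : autT n -> bool * int :=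
  match n return autT n -> bool * int with
  | O => fun _ => (false, 0)
  | 1%N => fun g => (gf g, 0)
  | 2%N => fun g => (gf g, psi p q 2 g)
  | S ((S m) as n1) => fun g =>
      if odd n1.+1 then
        (gf g, ((psi p q n1 (gL g) - psi p q n1 (gR g)) %% pow2mod n1.+1)%Z)
      else
        (gf g, (((p + q)%N%:Z * psi p q n1.+1 g - 2 * psi p q n1 (gR g))
                  %% pow2mod n1.+1)%Z)
  end.

(* J_n as a predicate on Aut(T_{n+1}) *)
Fixpoint J (p q : nat) (n : nat) {struct n} : autT n -> Prop :=
  match n return autT n -> Prop with
  | O => fun _ => True
  | S n1 => fun g =>
    (match n1 as k return autT k.+1 -> (autT k -> Prop) -> Prop with
     | O => fun _ _ => True                           (* n = 1 : J_1 = Aut(T_2) *)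
     | S m => fun g J_prev =>
       if m == 0%N then gL g = gR g                   (* n = 2 *)
       else                                           (* n = m+2 >= 3 *)
         J_prev (gL g) /\ J_prev (gR g) /\
         Delta p q m.+1 (gL g) = Phi p q (pow2mod m.+1) (Delta p q m.+1 (gR g))
     end) g (J p q n1)
  end.

(* Main.v *)
Require Import Defs.
From mathcomp Require Import all_boot all_order all_algebra zify ring.
Import GRing.Theory Num.Theory.
Local Open Scope ring_scope.
Lemma psi_odd p q m (g : autT m.+3) : odd m.+1 ->
  psi p q m.+3 g = divmod (psi p q m.+2 (gL g) + psi p q m.+2 (gR g)) (p + q)%N%:Z (pow2mod m.+3).
Proof. by move=> /= ->. Qed.

Lemma psi_even p q m (g : autT m.+4) : ~~ odd m.+2 ->
  psi p q m.+4 g = divmod (2 * (psi p q m.+2 (gL (gL g)) + psi p q m.+2 (gL (gR g)))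
                 - delta (gf (gL g)) * (p + q)%N%:Z * (p%:Z - q%:Z))
                (((p + q)%N%:Z) ^+ 2) (pow2mod m.+4).
Proof. by move=> /= /negbTE ->. Qed.

Lemma J_unf p q m (g : autT m.+3) : J p q m.+3 g ->
  Delta p q m.+2 (gL g) = Phi p q (pow2mod m.+2) (Delta p q m.+2 (gR g)).
Proof. by case=> _ []. Qed.

Lemma Delta_odd p q m (h : autT m.+3) : odd m.+3 ->
  Delta p q m.+3 h = (gf h, ((psi p q m.+2 (gL h) - psi p q m.+2 (gR h)) %% pow2mod m.+3)%Z).
Proof. by move=> /= ->. Qed.
Lemma modz_witness (x m : int) : exists k, (x %% m)%Z = x + k * m.
Proof. exists (- (x %/ m)%Z); rewrite {2}(divz_eq x m); ring. Qed.

Lemma pow2mod_even k : (1 < k)%N -> exists M, pow2mod k = 2 * M.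
Proof.
move=> hk; exists (2 ^ (k./2).-1)%N%:Z.
rewrite /pow2mod -PoszM -expnS prednK //.
by case: k hk => [|[|k]].
Qed.

Lemma divmod_par (a u : int) k : (1 < k)%N -> (exists w, u = 1 + 2 * w) ->
  coprimez u (pow2mod k) -> exists t, divmod a u (pow2mod k) = a + 2 * t.
Proof.
move=> hk [w ->] hco; have [M hM] := pow2mod_even k hk.
rewrite /divmod /invmod.
case: egcdzP => i v + _; rewrite (eqP hco) => hb /=.
have [c ->] := modz_witness (a * i) (pow2mod k).
rewrite hM in hb *.
have hi : i = 1 + 2 * (- v * M - i * w).
  apply/eqP; rewrite -subr_eq0; apply/eqP.
  have -> : i - (1 + 2 * (- v * M - i * w)) = (i * (1 + 2*w) + v * (2 * M)) - 1 by ring.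
  by rewrite hb subrr.
exists (a * (- v * M - i * w) + c * M); rewrite {1}hi; ring.
Qed.

Lemma cop_pow2 u k : odd u -> coprimez u%:Z (pow2mod k).
Proof.
move=> hu; rewrite coprimezE /pow2mod !absz_nat.
by apply: coprimeXr; rewrite coprimen2.
Qed.

Lemma eq_mod2 x y t : x = y + 2 * t -> (x = y %[mod 2])%Z.
Proof. by move=> ->; rewrite addrC mulrC modzMDl. Qed.

Lemma modz_wit2 (x M : int) : exists k, (x %% (2 * M))%Z = x + 2 * k.
Proof. have [c ->] := modz_witness x (2 * M); exists (c * M); ring. Qed.

Theorem lemma7 (p q : nat) (hp : (0 < p)%N) (hq : (0 < q)%N) (hpq : odd (p + q)) :
  forall n : nat, (3 <= n.+1)%N -> forall g : autT n.+1, J p q n.+1 g ->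
    (psi p q n.+1 g = psi p q n (gL g) + psi p q n (gR g) %[mod 2])%Z.
Proof.
have hw : exists w, (p + q)%N%:Z = 1 + 2 * w.
  exists ((p + q)./2)%:Z.
  by rewrite -{1}(odd_double_half (p + q)) hpq -muln2 PoszD PoszM mulrC.
have hco k : coprimez (p + q)%N%:Z (pow2mod k) by apply: cop_pow2.
move=> n hn; case: n hn => [|[|n]] // _ g hJ.
case ho: (odd n.+1).
  rewrite psi_odd //.
  have [t ->] := divmod_par (psi p q n.+2 (gL g) + psi p q n.+2 (gR g)) _ n.+3 erefl hw (hco _).
  exact: eq_mod2.
case: n ho g hJ => [|k] // ho g hJ.
have hk : odd k.+1 by move: ho; rewrite /=; case: (odd k).
have hk3 : odd k.+3 by rewrite /= negbK.
rewrite psi_even ?ho // (psi_odd p q k (gL g)) // (psi_odd p q k (gR g)) //.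
have := J_unf p q k.+1 g hJ; rewrite !Delta_odd // /Phi.
move=> [hf]; simpl in hf.
rewrite hf.
set A := psi p q k.+2 (gL (gL g)); set B := psi p q k.+2 (gR (gL g)).
set C := psi p q k.+2 (gL (gR g)); set D := psi p q k.+2 (gR (gR g)).
set E := delta (gf (gR g)) * _ * _.
have hw2 : exists w, ((p + q)%N%:Z) ^+ 2 = 1 + 2 * w.
  by case: hw => w ->; exists (2 * w + 2 * w ^+ 2); ring.
have [t1 ->] := divmod_par (2 * (A + C) - E) _ k.+4 erefl hw2 (coprimezXl _ (hco _)).
have [t2 ->] := divmod_par (A + B) _ k.+3 erefl hw (hco _).
have [t3 ->] := divmod_par (C + D) _ k.+3 erefl hw (hco _).
have [M hM] := pow2mod_even k.+3 erefl.
rewrite hM.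
have [k1 ->] := modz_wit2 (A - B) M.
have [k2 ->] := modz_wit2 (C - D) M.
set Z := (_ - (C - D + 2 * k2)); have [k3 ->] := modz_wit2 Z M; rewrite /Z => hx.
apply: (eq_mod2 _ _ (k3 - k1 - k2 + t1 - t2 - t3)).
lia.
Qed.
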